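(* Let $G$ be the enhanced conflict graph of any traffic pattern in a multicast switch and let $k>1$. If $G$ has a set $S$ of $k$ pairwise non-adjacent vertices which all have a common neighbor $v$, then at least $k-1$ vertices of $S$ represent subflows from the same input as $v$.
   Context: A flow is $(i,J)$ with input $i$ and nonempty fanout set $J$ of outputs; a traffic pattern is a finite set of flows; subflows are $(i,J,j)$ with $j\in J$. Enhanced conflict graph: one vertex per subflow; distinct subflows $(i,J,j),(i',J',j')$ adjacent iff $j=j'$, or $i=i'$ and $J\ne J'$. *)

(* Defs.v *)
From mathcomp Require Import all_boot.
Set Implicit Arguments. Unset Strict Implicit. Unset Printing Implicit Defensive.

(* A flow (i, J): input i and fanout set J of outputs. *)
Definition flow (I O : finType) := (I * {set O})%type.

(* A subflow (i, J, j) with j in J. *)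
Definition subflow (I O : finType) := (I * {set O} * O)%type.

Definition sf_in   (I O : finType) (s : subflow I O) : I := s.1.1.
Definition sf_fan  (I O : finType) (s : subflow I O) : {set O} := s.1.2.
Definition sf_out  (I O : finType) (s : subflow I O) : O := s.2.

Definition traffic_pattern (I O : finType) (P : {set flow I O}) : Prop :=
  forall f, f \in P -> f.2 != set0.

(* Vertices of the enhanced conflict graph of P: the subflows of P. *)
Definition is_subflow_of (I O : finType) (P : {set flow I O}) (s : subflow I O) : bool :=
  (s.1 \in P) && (sf_out s \in sf_fan s).

Definition ecg_adj (I O : finType) (s t : subflow I O) : bool :=
  (s != t) &&
  ((sf_out s == sf_out t) || ((sf_in s == sf_in t) && (sf_fan s != sf_fan t))).

(* Main.v *)
Require Import Defs.
From mathcomp Require Import all_boot.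

Theorem lemma3 (I O : finType) (P : {set flow I O}) (k : nat)
  (S : {set subflow I O}) (v : subflow I O) :
  traffic_pattern P ->
  1 < k ->
  (forall s, s \in S -> is_subflow_of P s) ->
  is_subflow_of P v ->
  #|S| = k ->
  (forall s t, s \in S -> t \in S -> ~~ ecg_adj s t) ->
  (forall s, s \in S -> ecg_adj v s) ->
  k.-1 <= #|[set s in S | sf_in s == sf_in v]|.
Proof.
move=> _ _ _ _ HS Hna Hadj.
have HB : #|[set s in S | sf_in s != sf_in v]| <= 1.
  apply/card_le1_eqP => s t; rewrite !inE => /andP[sS sv] /andP[tS tv].
  have os : sf_out v == sf_out s.
    move: (Hadj s sS); rewrite /ecg_adj => /andP[_ /orP[//|/andP[/eqP e _]]].
    by rewrite e eqxx in sv.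
  have ot : sf_out v == sf_out t.
    move: (Hadj t tS); rewrite /ecg_adj => /andP[_ /orP[//|/andP[/eqP e _]]].
    by rewrite e eqxx in tv.
  apply/eqP; apply: contraNT (Hna s t sS tS); rewrite eq_sym => st.
  by rewrite /ecg_adj st -(eqP os) ot.
have := cardsID [set s | sf_in s == sf_in v] S.
have -> : S :&: [set s | sf_in s == sf_in v] = [set s in S | sf_in s == sf_in v].
  by apply/setP => x; rewrite !inE.
have -> : S :\: [set s | sf_in s == sf_in v] = [set s in S | sf_in s != sf_in v].
  by apply/setP => x; rewrite !inE andbC.
move: HB; rewrite HS => HB E.
rewrite -E. move: HB.
case: #|[set s in S | sf_in s != sf_in v]| => [|[|m]] // _.
  by rewrite addn0 leq_pred.
by rewrite addn1.
Qed.
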